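(* Let $\mathcal R^{rrc}$ be a rich single-crossing domain of restricted classical preferences and $R',R''\in\mathcal R^{rrc}$ distinct. If $R''$ cuts $R'$ from above (at the bundles $(t,q)$ with $q>0$ and $t<\min\{t_{R'},t_{R''}\}$), then $t_{R'}<t_{R''}$.
   Context: $(t',q')<(t'',q'')$ means $t'<t''$, $q'<q''$; $x\le y$ means $x=y$ or $x<y$; $\square(z)=\{x:x\le z\}$. A restricted classical preference is a complete transitive relation $R$ (strict part $P$, indifference $I$) on $[0,t_R]\times[0,1]$, with a unique payment bound $0<t_R<\infty$, such that: (money-monotone) for all $q\in(0,1]$, $t_R\ge t''>t'\ge0$ implies $(t',q)P(t'',q)$; ($q$-monotone) for all $t\in[0,t_R)$, $1\ge q''>q'\ge0$ implies $(t,q'')P(t,q')$; (0-equivalence) $(0,0)I(t_R,q)$ for all $q\in[0,1]$ and $(0,0)I(t,0)$ for all $t\in[0,t_R)$; and $R$ is continuous (closed upper and lower contour sets) on $[0,t_R]\times[0,1]$. Two restricted classical preferences $R',R''$ with $t_{R'}\ne t_{R''}$ satisfy single-crossing if for every $(t,q)$ with $q>0$, $t<\min\{t_{R'},t_{R''}\}$, the indifference sets of $R'$ and $R''$ through $(t,q)$ meet only at $(t,q)$; $R''$ cuts $R'$ from above at such $(t,q)$ if $\square(t,q)\cap\{x:xR''(t,q)\}\subseteq\square(t,q)\cap\{x:xR'(t,q)\}$. A rich single-crossing domain $\mathcal R^{rrc}$ of restricted classical preferences is a set of pairwise single-crossing restricted classical preferences such that for all $x'<x''$ there is a member $R$ with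 $x'Ix''$. *)

(* Defs.v *)
From HB Require Import structures.
From mathcomp Require Import all_boot all_order all_algebra.
From mathcomp Require Import all_classical all_reals all_analysis.
Import numFieldNormedType.Exports.
Set Implicit Arguments. Unset Strict Implicit. Unset Printing Implicit Defensive.
Import Order.TTheory GRing.Theory Num.Theory.
Local Open Scope ring_scope.
Local Open Scope classical_set_scope.

(* A (candidate) preference: a payment bound t_R and a weak preference
   relation R (x R y : "x is at least as good as y"); only its restriction
   to the consumption set [0,t_R] x [0,1] matters. *)
Record pref (R : realType) := Pref { tb : R ; wp : R * R -> R * R -> Prop }.

Section Defs.
Variable R : realType.
Implicit Types (p : pref R) (x y z : R * R).

Definition dom p x : Prop := (0 <= x.1 <= tb p) /\ (0 <= x.2 <= 1).
Definition sP p x y : Prop := wp p x y /\ ~ wp p y x.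
Definition sI p x y : Prop := wp p x y /\ wp p y x.

Definition lt2 x y : Prop := x.1 < y.1 /\ x.2 < y.2.
Definition le2 x y : Prop := x = y \/ lt2 x y.

Definition restricted_classical p : Prop :=
  0 < tb p /\
  (forall x y, dom p x -> dom p y -> wp p x y \/ wp p y x) /\
  (forall x y z, dom p x -> dom p y -> dom p z ->
     wp p x y -> wp p y z -> wp p x z) /\
  (forall q t' t'', 0 < q <= 1 -> 0 <= t' -> t' < t'' -> t'' <= tb p ->
     sP p (t', q) (t'', q)) /\
  (forall t q' q'', 0 <= t < tb p -> 0 <= q' -> q' < q'' -> q'' <= 1 ->
     sP p (t, q'') (t, q')) /\
  (forall q, 0 <= q <= 1 -> sI p (0, 0) (tb p, q)) /\
  (forall t, 0 <= t < tb p -> sI p (0, 0) (t, 0)) /\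
  (forall y, dom p y ->
     closed [set x | dom p x /\ wp p x y] /\
     closed [set x | dom p x /\ wp p y x]).

Definition single_crossing p1 p2 : Prop :=
  tb p1 <> tb p2 /\
  forall t q, 0 < q <= 1 -> 0 <= t -> t < tb p1 -> t < tb p2 ->
    forall x, dom p1 x -> dom p2 x -> sI p1 x (t, q) -> sI p2 x (t, q) ->
      x = (t, q).

(* p2 (= R'') cuts p1 (= R') from above at z:
   box(z) ∩ {x : x R'' z} ⊆ box(z) ∩ {x : x R' z} *)
Definition cuts_from_above p2 p1 z : Prop :=
  forall x, le2 x z -> dom p2 x -> wp p2 x z -> dom p1 x /\ wp p1 x z.

Definition rich_sc_domain (S : set (pref R)) : Prop :=
  (forall p, S p -> restricted_classical p) /\
  (forall p1 p2, S p1 -> S p2 -> p1 <> p2 -> single_crossing p1 p2) /\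
  (forall x' x'', 0 <= x'.1 -> 0 <= x'.2 -> x''.2 <= 1 -> lt2 x' x'' ->
     exists p, S p /\ dom p x' /\ dom p x'' /\ sI p x' x'').

End Defs.

(* Main.v *)
Require Import Defs.
From HB Require Import structures.
From mathcomp Require Import all_boot all_order all_algebra.
From mathcomp Require Import all_classical all_reals all_analysis.
From mathcomp Require Import ring lra.
Import numFieldNormedType.Exports.
Import Order.TTheory GRing.Theory Num.Theory.
Local Open Scope ring_scope.
Local Open Scope classical_set_scope.
Lemma nb (R : realType) (A : set (R * R)) (x0 : R * R) :
  closed A -> ~ A x0 -> exists2 e : R, 0 < e &
  forall x y, `|x - x0.1| < e -> `|y - x0.2| < e -> ~ A (x, y).
Proof.
move=> cA nA.
have : open (~` A) by exact: closed_openC.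
rewrite openE => /(_ x0 nA) /=.
rewrite /interior.
move/nbhs_ballP => [e e0 he].
exists e => // x y hx hy.
apply: he.
rewrite /ball /=.
split => /=.
- by rewrite /ball /= distrC.
- by rewrite /ball /= distrC.
Qed.


Theorem mainTheorem16 (R : realType) (S : set (pref R)) (p1 p2 : pref R) :
  rich_sc_domain S -> S p1 -> S p2 -> p1 <> p2 ->
  (forall t q, 0 < q <= 1 -> 0 <= t -> t < tb p1 -> t < tb p2 ->
     cuts_from_above p2 p1 (t, q)) ->
  tb p1 < tb p2.
Proof.
move=> [hrc [hsc _]] S1 S2 n12 hcut.
have [hne _] := hsc _ _ S1 S2 n12.
case: (ltrgtP (tb p1) (tb p2)) => // hab.
exfalso.

have [b0 [c1 [tr1 [mm1 [qm1 [ze1 [zt1 cont1]]]]]]] := hrc _ S1.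
have [a0 [c2 [tr2 [mm2 [qm2 [ze2 [zt2 cont2]]]]]]] := hrc _ S2.
set a := tb p2 in hab a0 c2 tr2 mm2 qm2 ze2 zt2 cont2 hcut *.
set b := tb p1 in hab b0 c1 tr1 mm1 qm1 ze1 zt1 cont1 hcut *.
have a0' : 0 <= a by exact: ltW.
pose w : R * R := (a, 1/2).
have dw : dom p1 w by rewrite /w /dom /= -/b; split; apply/andP; split; lra.
have da1 : dom p1 (a, 1) by rewrite /dom /= -/b; split; apply/andP; split; lra.
have d00 : dom p1 (0, 0) by rewrite /dom /= -/b; split; apply/andP; split; lra.
have da0 : dom p1 (a, 0) by rewrite /dom /= -/b; split; apply/andP; split; lra.
have P1 : sP p1 (a, 1) w by apply: qm1; [apply/andP; split|lra|lra|by []].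
have P2 : sP p1 w (a, 0) by apply: qm1; [apply/andP; split|lra|lra|lra].
have I3 : sI p1 (0, 0) (a, 0) by apply: zt1; apply/andP; split.
have [L1 _] := cont1 w dw.
have [L2 L2'] := cont1 w dw.
have nL1 : ~ (dom p1 (a, 1) /\ wp p1 w (a, 1)) by move=> [_ h]; exact: P1.2.
have [e1 e10 he1] := @nb _ _ _ L2' nL1.
have nL2 : ~ (dom p1 (0, 0) /\ wp p1 (0, 0) w).
  move=> [_ h]; apply: P2.2.
  apply: (tr1 _ (0,0)) => //; exact: I3.2.
have [e2 e20 he2] := @nb _ _ _ L1 nL2.
pose q' := Num.min (e2 / 2) (1 / 2).
have q'0 : 0 < q' by rewrite /q' lt_min; apply/andP; split; [exact: divr_gt0|lra].
have q'e : q' < e2 by rewrite /q' gt_min; apply/orP; left; lra.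
have q'1 : q' < 1 by rewrite /q' gt_min; apply/orP; right; lra.
pose x0 : R * R := (0, q').
have nx0w : ~ wp p1 x0 w.
  move=> h; apply: (he2 0 q') => /=; first by rewrite subr0 normr0.
  + by rewrite subr0 ger0_norm ?ltW.
  + by split => //; rewrite /dom /= -/b; split; apply/andP; split; lra.
have dx02 : dom p2 x0 by rewrite /dom /= -/a; split; apply/andP; split; lra.
have da12 : dom p2 (a, 1) by rewrite /dom /= -/a; split; apply/andP; split; lra.
have d002 : dom p2 (0, 0) by rewrite /dom /= -/a; split; apply/andP; split; lra.
have Q1 : sP p2 x0 (0, 0) by apply: qm2; try (apply/andP; split); lra.
have Q2 : sI p2 (0, 0) (a, 1) by apply: ze2; apply/andP; split; lra.
have [U2 _] := cont2 x0 dx02.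
have nU : ~ (dom p2 (a, 1) /\ wp p2 (a, 1) x0).
  move=> [_ h]; apply: Q1.2; apply: (tr2 _ (a, 1)) => //; exact: Q2.1.
have [e3 e30 he3] := @nb _ _ _ U2 nU.
pose m := Num.min a (Num.min e1 e3).
have m0 : 0 < m by rewrite /m !lt_min a0 e10 e30.
have ma : m <= a by rewrite /m ge_min lexx.
have me1 : m <= e1 by rewrite /m !ge_min lexx orbT.
have me3 : m <= e3 by rewrite /m !ge_min lexx !orbT.
pose t := a - m / 2.
have t0 : 0 < t by rewrite /t; lra.
have ta : t < a by rewrite /t; lra.
have tn : `|t - a| < Num.min e1 e3.
  rewrite /t (_ : a - m / 2 - a = - (m / 2)); last by ring.
  rewrite normrN ger0_norm; last lra.
  rewrite lt_min; apply/andP; split; lra.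
move: tn; rewrite lt_min => /andP [tn1 tn3].
pose z : R * R := (t, 1).
have dz2 : dom p2 z by rewrite /dom /= -/a; split; apply/andP; split; lra.
have dz1 : dom p1 z by rewrite /dom /= -/b; split; apply/andP; split; lra.
have hxz : wp p2 x0 z.
  case: (c2 _ _ dz2 dx02) => // h; exfalso.
  apply: (he3 t 1) => //=; first by rewrite subrr normr0.
have hzw : wp p1 z w.
  case: (c1 _ _ dz1 dw) => // h; exfalso.
  apply: (he1 t 1) => //=; first by rewrite subrr normr0.
have [dx01 hx0z] : dom p1 x0 /\ wp p1 x0 z.
  apply: (hcut t 1) => //; first (by apply/andP; split); first exact: ltW; first lra.
  by right; split.
apply: nx0w; exact: (tr1 _ z).
Qed.
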